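(* Let $(X,\tau_1,\tau_2)$ be a bitopological space, $i,j\in\{1,2\}$, $i\neq j$, which is $(i,j)$-almost regular, $(i,j)$-semiregular and a $j$-$P$-space. Then $X$ is $\tau_i$-paralindelöf with respect to $\tau_j$ if and only if $X$ is $(i,j)_r$-nearly paralindelöf.
   Context: $(X,\tau_1,\tau_2)$ is a bitopological space and $i,j\in\{1,2\}$, $i\neq j$. For $k\in\{1,2\}$, $k\text{-}\mathrm{int}$ and $k\text{-}\mathrm{cl}$ denote interior and closure with respect to $\tau_k$; ''$k$-open'' means $\tau_k$-open. A set $A$ is $(i,j)$-regular open if $A=i\text{-}\mathrm{int}(j\text{-}\mathrm{cl}(A))$. $X$ is $(i,j)$-semiregular if the $(i,j)$-regular open sets form a base for $\tau_i$. $X$ is $(i,j)$-almost regular if for each $x\in X$ and each $(i,j)$-regular open set $U$ containing $x$ there is an $(i,j)$-regular open set $V$ with $x\in V\subseteq j\text{-}\mathrm{cl}(V)\subseteq U$. A family $\mathcal V$ refines $\mathcal U$ if each member of $\mathcal V$ is contained in some member of $\mathcal U$; a family is a cover of $X$ if its union is $X$. A family is $k$-locally countable if every $x\in X$ has a $k$-open neighbourhood meeting at most countably many of its members. $X$ is a $k$-$P$-space if every intersection of countably many $k$-open sets is $k$-open. $X$ is $\tau_i$-paralindelöf with respect to $\tau_j$ if every cover of $X$ by $i$-open sets has a refinement which is a cover of $X$ by $i$-open sets and is $j$-locally countable. $X$ is $(i,j)_r$-nearly paralindelöf if every cover $\{U_\alpha:\alpha\in\Delta\}$ of $X$ by $(i,j)$-regular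 open sets has a $j$-locally countable cover $\{V_\beta:\beta\in B\}$ of $X$ by $(i,j)$-regular open sets such that for each $\beta\in B$ there is $\alpha(\beta)\in\Delta$ with $j\text{-}\mathrm{cl}(V_\beta)\subseteq U_{\alpha(\beta)}$. *)

(* Defs.v *)
From Stdlib Require Import Classical.

Definition set (X : Type) := X -> Prop.

Section Topo.
Context {X : Type}.

Definition subset (A B : set X) : Prop := forall x, A x -> B x.
Definition set_eq (A B : set X) : Prop := forall x, A x <-> B x.

Definition is_topology (O : set X -> Prop) : Prop :=
  O (fun _ => True) /\
  (forall (D : Type) (F : D -> set X), (forall d, O (F d)) ->
      O (fun x => exists d, F d x)) /\
  (forall A B, O A -> O B -> O (fun x => A x /\ B x)).

Definition interior (O : set X -> Prop) (A : set X) : set X :=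
  fun x => exists U, O U /\ U x /\ subset U A.

Definition closure (O : set X -> Prop) (A : set X) : set X :=
  fun x => forall U, O U -> U x -> exists y, U y /\ A y.

Definition regular_open (Oi Oj : set X -> Prop) (A : set X) : Prop :=
  set_eq A (interior Oi (closure Oj A)).

Definition semiregular (Oi Oj : set X -> Prop) : Prop :=
  (forall A, regular_open Oi Oj A -> Oi A) /\
  (forall U x, Oi U -> U x ->
     exists V, regular_open Oi Oj V /\ V x /\ subset V U).

Definition almost_regular (Oi Oj : set X -> Prop) : Prop :=
  forall x U, regular_open Oi Oj U -> U x ->
    exists V, regular_open Oi Oj V /\ V x /\ subset (closure Oj V) U.

Definition countable {B : Type} (P : B -> Prop) : Prop :=
  exists f : {b : B | P b} -> nat, forall u v, f u = f v -> u = v.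

Definition is_cover {D : Type} (U : D -> set X) : Prop :=
  forall x, exists d, U d x.

Definition refines {B D : Type} (V : B -> set X) (U : D -> set X) : Prop :=
  forall b, exists d, subset (V b) (U d).

Definition locally_countable (O : set X -> Prop) {B : Type} (V : B -> set X)
  : Prop :=
  forall x, exists N, O N /\ N x /\
    countable (fun b => exists y, N y /\ V b y).

Definition P_space (O : set X -> Prop) : Prop :=
  forall U : nat -> set X, (forall n, O (U n)) -> O (fun x => forall n, U n x).

Definition paralindelof_wrt (Oi Oj : set X -> Prop) : Prop :=
  forall (D : Type) (U : D -> set X), (forall d, Oi (U d)) -> is_cover U ->
    exists (B : Type) (V : B -> set X),
      refines V U /\ is_cover V /\ (forall b, Oi (V b)) /\
      locally_countable Oj V.

Definition nearly_paralindelof (Oi Oj : set X -> Prop) : Prop :=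
  forall (D : Type) (U : D -> set X),
    (forall d, regular_open Oi Oj (U d)) -> is_cover U ->
    exists (B : Type) (V : B -> set X),
      locally_countable Oj V /\ is_cover V /\
      (forall b, regular_open Oi Oj (V b)) /\
      (forall b, exists d, subset (closure Oj (V b)) (U d)).

End Topo.

Inductive idx := one | two.

Definition sel {X : Type} (k : idx) (t1 t2 : set X -> Prop) : set X -> Prop :=
  match k with one => t1 | two => t2 end.

(* Main.v *)
Require Import Defs.
From Stdlib Require Import Classical.

Section S.
Context {X : Type}.

Lemma cl_incl (O : set X -> Prop) A : subset A (closure O A).
Proof. intros x Ax U _ Ux. exists x; auto. Qed.

Lemma cl_mono (O : set X -> Prop) A B : subset A B -> subset (closure O A) (closure O B).
Proof. intros h x c U OU Ux. destruct (c U OU Ux) as [y [Uy Ay]]. exists y; auto. Qed.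

Lemma cl_idem (O : set X -> Prop) A : subset (closure O (closure O A)) (closure O A).
Proof. intros x c U OU Ux. destruct (c U OU Ux) as [y [Uy Cy]]. apply Cy; auto. Qed.

Lemma int_incl (O : set X -> Prop) A : subset (interior O A) A.
Proof. intros x [U [_ [Ux h]]]. auto. Qed.

Lemma int_mono (O : set X -> Prop) A B : subset A B -> subset (interior O A) (interior O B).
Proof. intros h x [U [OU [Ux s]]]. exists U; repeat split; auto. intros y Uy; auto. Qed.

Lemma countable_sub {B : Type} (P Q : B -> Prop) :
  (forall b, Q b -> P b) -> countable P -> countable Q.
Proof.
  intros h [f hf].
  exists (fun u => f (exist _ (proj1_sig u) (h _ (proj2_sig u)))).
  intros [u qu] [v qv] e. simpl in e. apply hf in e. inversion e. subst.
  f_equal. apply proof_irrelevance.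
Qed.

Lemma fwd (Oi Oj : set X -> Prop) :
  almost_regular Oi Oj -> semiregular Oi Oj ->
  paralindelof_wrt Oi Oj -> nearly_paralindelof Oi Oj.
Proof.
  intros Har [Hro Hbb] Hp D U HU Hc.
  set (D' := {V : set X | regular_open Oi Oj V /\ exists d, subset (closure Oj V) (U d)}).
  destruct (Hp D' (fun v => proj1_sig v)) as [B [W [Href [Hcov [Hop Hlc]]]]].
  - intros [v [hv hw]]; simpl; auto.
  - intros x. destruct (Hc x) as [d Ud].
    destruct (Har x (U d) (HU d) Ud) as [V [RV [Vx sV]]].
    exists (exist _ V (conj RV (ex_intro _ d sV))); simpl; auto.
  - exists B, (fun b => interior Oi (closure Oj (W b))).
    assert (Wsub : forall b, subset (W b) (interior Oi (closure Oj (W b)))).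
    { intros b x Wx. exists (W b); repeat split; auto. apply cl_incl. }
    assert (Ceq : forall b, set_eq (closure Oj (interior Oi (closure Oj (W b))))
                                  (closure Oj (W b))).
    { intros b x; split; intro h.
      - apply cl_idem. eapply cl_mono; [|exact h]. apply int_incl.
      - eapply cl_mono; [|exact h]. apply Wsub. }
    split; [|split; [|split]].
    + intros x. destruct (Hlc x) as [N [ON [Nx cN]]].
      exists N; repeat split; auto.
      eapply countable_sub; [|exact cN].
      intros b [y [Ny Iy]]. apply int_incl in Iy.
      destruct (Iy N ON Ny) as [z [Nz Wz]]. exists z; auto.
    + intros x. destruct (Hcov x) as [b Wb]. exists b. apply Wsub; auto.
    + intros b x; split; intro h.
      * eapply int_mono; [|exact h]. intros y hy. apply Ceq. exact hy.
      * eapply int_mono; [|exact h]. intros y hy. apply Ceq. exact hy.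
    + intros b. destruct (Href b) as [[v [Rv [d hd]]] sv]. simpl in sv.
      exists d. intros x hx. apply hd. rewrite (Ceq b x) in hx.
      eapply cl_mono; [exact sv|exact hx].
Qed.

Lemma bwd (Oi Oj : set X -> Prop) :
  semiregular Oi Oj -> nearly_paralindelof Oi Oj -> paralindelof_wrt Oi Oj.
Proof.
  intros [Hro Hb] Hn D U HU Hc.
  set (D' := {V : set X | regular_open Oi Oj V /\ exists d, subset V (U d)}).
  destruct (Hn D' (fun v => proj1_sig v)) as [B [W [Hlc [Hcov [HR Hsub]]]]].
  - intros [v [hv hw]]; simpl; auto.
  - intros x. destruct (Hc x) as [d Ud].
    destruct (Hb (U d) x (HU d) Ud) as [V [RV [Vx sV]]].
    exists (exist _ V (conj RV (ex_intro _ d sV))); simpl; auto.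
  - exists B, W. split; [|split; [|split]]; auto.
    intros b. destruct (Hsub b) as [[v [Rv [d hd]]] sv]. simpl in sv.
    exists d. intros x Wx. apply hd, sv, cl_incl, Wx.
Qed.
End S.

Theorem mainTheorem10 (X : Type) (t1 t2 : set X -> Prop)
  (H1 : is_topology t1) (H2 : is_topology t2) (i j : idx) (Hij : i <> j)
  (Har : almost_regular (sel i t1 t2) (sel j t1 t2))
  (Hsr : semiregular (sel i t1 t2) (sel j t1 t2))
  (HP : P_space (sel j t1 t2)) :
  paralindelof_wrt (sel i t1 t2) (sel j t1 t2) <->
  nearly_paralindelof (sel i t1 t2) (sel j t1 t2).
Proof.
  split; [apply fwd; auto | apply bwd; auto].
Qed.
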